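(* Let $0<q<1$, let $X\ge 0$ have a distribution $P_X$ with $q$-density $f$ and finite $q$-moments of all orders, and let $m\in\mathbb{N}$. If there is a constant $C>0$ such that $$f(q^{-mj})\ge C\,q^{mj(j+1)/2}\quad\text{for all } j\ge 0,$$ then $P_X$ is $q$-moment indeterminate.
   Context: Fix $0<q<1$. All random variables are non-negative. The Jackson $q$-integral is $\int_0^a g(t)\,d_qt=a(1-q)\sum_{j=0}^\infty g(aq^j)q^j$ for $a>0$, and the improper $q$-integral is $\int_0^\infty g(t)\,d_qt=(1-q)\sum_{j=-\infty}^{\infty}g(q^j)q^j$. A function $f$ on $(0,\infty)$ is a $q$-density of $X$ (with distribution function $F_X$) if $F_X(x)=\int_0^x f(t)\,d_qt$ for all $x>0$. The $n$-th $q$-moment is $m_q(n;f)=m_q(n;X)=\int_0^\infty t^nf(t)\,d_qt=(1-q)\sum_{j\in\mathbb{Z}}q^{j(n+1)}f(q^j)$, $n\in\mathbb{N}_0$. For functions $f,g$ on $(0,\infty)$ write $f\sim g$ iff $f(q^j)=g(q^j)$ for all $j\in\mathbb{Z}$. A distribution $P_X$ with $q$-density $f$ and finite $q$-moments of all orders is $q$-moment determinate if, whenever $Y$ is a random variable with $q$-density $g$ and $m_q(k;Y)=m_q(k;X)$ for all $k\in\mathbb{N}_0$, one has $f\sim g$; otherwise it is $q$-moment indeterminate. *)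

(* Defs.v *)
From Stdlib Require Import Reals Lra.
Open Scope R_scope.

(* Jackson q-integral on [0,a]:  int_0^a g d_qt = a(1-q) sum_{j>=0} g(a q^j) q^j,
   stated relationally: the series converges with the given value. *)
Definition jackson_int (q a : R) (g : R -> R) (v : R) : Prop :=
  infinite_sum (fun j : nat => a * (1 - q) * (g (a * q ^ j) * q ^ j)) v.

(* Improper q-integral int_0^oo g d_qt = (1-q) sum_{j in Z} g(q^j) q^j,
   the bilateral series being convergent (both halves j>=0 and j<0 converge). *)
Definition improper_qint (q : R) (g : R -> R) (v : R) : Prop :=
  exists v1 v2 : R,
    infinite_sum (fun j : nat => g (q ^ j) * q ^ j) v1 /\
    infinite_sum (fun j : nat => g (/ q ^ (S j)) * / q ^ (S j)) v2 /\
    v = (1 - q) * (v1 + v2).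

Definition qmoment (q : R) (f : R -> R) (n : nat) (v : R) : Prop :=
  improper_qint q (fun t => t ^ n * f t) v.

Definition nonneg_distribution_function (F : R -> R) : Prop :=
  (forall x y, x <= y -> F x <= F y) /\
  (forall x, x < 0 -> F x = 0) /\
  (forall x eps, 0 < eps -> exists d, 0 < d /\
       forall y, x < y < x + d -> Rabs (F y - F x) < eps) /\
  (forall eps, 0 < eps -> exists N, forall x, N < x -> Rabs (F x - 1) < eps).

Definition is_qdensity_of (q : R) (f F : R -> R) : Prop :=
  forall x, 0 < x -> jackson_int q x f (F x).

Definition is_qdensity (q : R) (f : R -> R) : Prop :=
  exists F, nonneg_distribution_function F /\ is_qdensity_of q f F.

Definition qequiv (q : R) (f g : R -> R) : Prop :=
  forall j : Z, f (powerRZ q j) = g (powerRZ q j).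

Definition qmoment_determinate (q : R) (f : R -> R) : Prop :=
  forall g : R -> R, is_qdensity q g ->
    (forall k : nat, exists v, qmoment q f k v /\ qmoment q g k v) ->
    qequiv q f g.

Definition qmoment_indeterminate (q : R) (f : R -> R) : Prop :=
  ~ qmoment_determinate q f.

(* Main.v *)
Require Import Defs.
From Stdlib Require Import Reals Lra Lia ZArith.
From Coquelicot Require Import Coquelicot.
Open Scope R_scope.

Lemma pow_le1 x n : 0 <= x <= 1 -> x ^ n <= 1.
Proof. intro H. rewrite <- (pow1 n). apply pow_incr. lra. Qed.

Section Euler.
Variable p : R.
Hypothesis Hp : 0 < p < 1.

Fixpoint ce (i : nat) : R :=
  match i with
  | O => 1
  | S j => - p ^ (S j) * ce j / (1 - p ^ (S j))
  end.

Definition tri (i : nat) : nat := (i * (i + 1) / 2)%nat.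

Lemma tri_S i : tri (S i) = (tri i + S i)%nat.
Proof.
  unfold tri.
  replace (S i * (S i + 1))%nat with (i * (i + 1) + (S i) * 2)%nat by lia.
  rewrite Nat.div_add; lia.
Qed.

Lemma pS_lt i : 0 < p ^ (S i) <= p.
Proof.
  split. apply pow_lt; lra.
  assert (p ^ i <= 1) by (apply pow_le1; lra).
  simpl. nra.
Qed.

Lemma ce_nz i : ce i <> 0.
Proof.
  induction i; simpl. lra.
  pose proof (pS_lt i) as H. simpl in H.
  unfold Rdiv. intro E.
  apply Rmult_integral in E as [E|E].
  - apply Rmult_integral in E as [E|E]. nra. contradiction.
  - apply Rinv_neq_0_compat in E; auto. lra.
Qed.

Lemma ce_bound i :
  Rabs (ce i) <= exp ((p - p ^ (S i)) / (1 - p) ^ 2) * p ^ (tri i).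
Proof.
  induction i.
  - simpl. unfold tri; simpl. rewrite Rabs_R1.
    replace ((p - p * 1) / ((1 - p) * ((1 - p) * 1))) with 0 by (field; lra).
    rewrite exp_0. lra.
  - pose proof (pS_lt i) as Hx. set (x := p ^ S i) in *.
    change (ce (S i)) with (- x * ce i / (1 - x)).
    rewrite tri_S, pow_add.
    assert (Hex : 1 + x / (1 - p) <= exp (x / (1 - p))).
    { destruct (Req_dec (x / (1-p)) 0) as [E|E].
      rewrite E, exp_0; lra.
      left. apply exp_ineq1; auto. }
    assert (Hk : 1 <= (1 - x) * exp (x / (1 - p))).
    { apply Rle_trans with ((1 - x) * (1 + x / (1 - p))).
      - assert (Ha: (1 - x) * (1 + x / (1 - p)) = 1 + x * (p - x) / (1 - p)) by (field; lra).
        rewrite Ha. assert (0 <= x * (p - x) / (1 - p)).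
        { apply Rmult_le_pos. nra. left; apply Rinv_0_lt_compat; lra. }
        lra.
      - apply Rmult_le_compat_l; lra. }
    assert (Hpx : p ^ S (S i) = x * p) by (unfold x; simpl; ring).
    assert (Hexp : exp ((p - p ^ S (S i)) / (1 - p) ^ 2) =
                   exp ((p - x) / (1 - p) ^ 2) * exp (x / (1 - p))).
    { rewrite <- exp_plus. f_equal. rewrite Hpx. field. lra. }
    rewrite Hexp.
    replace (- x * ce i / (1 - x)) with ((- x / (1 - x)) * ce i) by (field; lra).
    rewrite Rabs_mult.
    replace (Rabs (- x / (1 - x))) with (x / (1 - x)).
    2:{ unfold Rdiv. rewrite <- Ropp_mult_distr_l, Rabs_Ropp, Rabs_right. auto.
        apply Rle_ge, Rmult_le_pos. lra. left; apply Rinv_0_lt_compat; lra. }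
    assert (Hq : 0 < x / (1 - x)) by (apply Rdiv_lt_0_compat; lra).
    apply Rle_trans with (x / (1 - x) * (exp ((p - x) / (1 - p) ^ 2) * p ^ tri i)).
    { apply Rmult_le_compat_l; lra. }
    assert (0 < exp ((p - x) / (1 - p) ^ 2) * p ^ tri i).
    { apply Rmult_lt_0_compat. apply exp_pos. apply pow_lt; lra. }
    assert (Hxx : p ^ S i = x) by reflexivity. rewrite Hxx.
    replace (x / (1 - x) * (exp ((p - x) / (1 - p) ^ 2) * p ^ tri i)) with
      ((exp ((p - x) / (1 - p) ^ 2) * p ^ tri i * x) * / (1 - x)) by (field; lra).
    replace (exp ((p - x) / (1 - p) ^ 2) * exp (x / (1 - p)) * (p ^ tri i * x)) with
      ((exp ((p - x) / (1 - p) ^ 2) * p ^ tri i * x) * exp (x / (1 - p))) by ring.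
    apply Rmult_le_compat_l. nra.
    apply (Rmult_le_reg_l (1 - x)). lra. rewrite Rinv_r by lra. lra.
Qed.

Lemma ce_bound' i : Rabs (ce i) <= exp (p / (1 - p) ^ 2) * p ^ (tri i).
Proof.
  eapply Rle_trans. apply ce_bound.
  apply Rmult_le_compat_r. left; apply pow_lt; lra.
  destruct (Req_dec ((p - p ^ S i) / (1 - p) ^ 2) (p / (1 - p) ^ 2)) as [E|E].
  rewrite E; lra. left. apply exp_increasing.
  pose proof (pS_lt i). unfold Rdiv.
  apply Rmult_lt_compat_r. apply Rinv_0_lt_compat. apply pow_lt; lra. lra.
Qed.

Lemma ce_ex w : 0 < w -> ex_series (fun i => ce i * w ^ i).
Proof.
  intro Hw. apply ex_series_Rabs.
  apply ex_series_DAlembert with 0. lra.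
  { intro n. apply Rmult_integral_contrapositive; split. apply ce_nz.
    apply pow_nonzero; lra. }
  apply is_lim_seq_ext with (fun n => (p ^ (S n) * w) / (1 - p ^ S n)).
  { intro n. pose proof (pS_lt n). pose proof (ce_nz n). assert (w^n <> 0) by (apply pow_nonzero; lra).
    replace (ce (S n) * w ^ S n / (ce n * w ^ n)) with (- (p ^ (S n) * w / (1 - p ^ S n))).
    2:{ simpl. field. simpl in H. repeat split; auto; lra. }
    rewrite Rabs_Ropp, Rabs_right. auto.
    apply Rle_ge. apply Rdiv_le_0_compat; nra. }
  replace 0 with (0 * w / (1 - 0)) by (field; lra).
  apply is_lim_seq_div'.
  apply is_lim_seq_mult'. apply (is_lim_seq_incr_1 (fun n => p ^ n) 0). apply is_lim_seq_geom. rewrite Rabs_right; lra.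
  apply is_lim_seq_const.
  apply is_lim_seq_minus'. apply is_lim_seq_const. apply (is_lim_seq_incr_1 (fun n => p ^ n) 0). apply is_lim_seq_geom. rewrite Rabs_right; lra.
  lra.
Qed.

Definition Te w := Series (fun i => ce i * w ^ i).

Lemma Te_func w : 0 < w -> Te w = (1 - p * w) * Te (p * w).
Proof.
  intro Hw.
  assert (Ha := Series_correct _ (ce_ex w Hw)).
  assert (Hpw : 0 < p * w) by nra.
  assert (Hb := Series_correct _ (ce_ex (p * w) Hpw)).
  fold (Te w) in Ha. fold (Te (p * w)) in Hb.
  pose proof (is_series_minus _ _ _ _ Ha Hb) as Hd.
  assert (Hd2 : is_series (fun k => plus (ce (S k) * w ^ S k) (opp (ce (S k) * (p * w) ^ S k))) (Te w - Te (p * w))).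
  { apply (is_series_incr_1 (fun n => plus (ce n * w ^ n) (opp (ce n * (p * w) ^ n)))).
    match goal with |- is_series _ ?L => replace L with (plus (Te w) (opp (Te (p * w)))) end.
    exact Hd.
    unfold plus, opp; simpl. ring. }
  clear Hd. rename Hd2 into Hd.
  assert (Hd' : is_series (fun k => (- (p * w)) * (ce k * (p * w) ^ k)) (- (p * w) * Te (p * w))).
  { apply (is_series_scal (- (p*w)) _ _ Hb). }
  assert (E : forall k, plus (ce (S k) * w ^ S k) (opp (ce (S k) * (p * w) ^ S k)) =
                        - (p * w) * (ce k * (p * w) ^ k)).
  { intro k. unfold plus, opp; simpl. pose proof (pS_lt k). simpl in H.
    rewrite !Rpow_mult_distr. field. lra. }
  apply (is_series_ext _ _ _ E) in Hd.
  apply is_series_unique in Hd. apply is_series_unique in Hd'.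
  rewrite Hd' in Hd. lra.
Qed.

Lemma Te_zero r : Te (/ p ^ (S r)) = 0.
Proof.
  assert (Hp0 : p <> 0) by lra.
  induction r.
  - rewrite Te_func. simpl. replace (1 - p * / (p * 1)) with 0 by (field; lra). ring.
    apply Rinv_0_lt_compat, pow_lt; lra.
  - rewrite Te_func. replace (p * / p ^ S (S r)) with (/ p ^ S r).
    rewrite IHr. ring. simpl. field. split; auto. apply pow_nonzero; auto.
    apply Rinv_0_lt_compat, pow_lt; lra.
Qed.

End Euler.
Lemma Te_series p r : 0 < p < 1 -> is_series (fun i => ce p i * (/ p ^ (S r)) ^ i) 0.
Proof.
  intro Hp. rewrite <- (Te_zero p Hp r). apply Series_correct, ce_ex; auto.
  apply Rinv_0_lt_compat, pow_lt; lra.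
Qed.

Lemma sparse_sum (m : nat) (a b : nat -> R) :
  (1 <= m)%nat ->
  (forall i, a (m * i)%nat = b i) ->
  (forall i r, (0 < r < m)%nat -> a (m * i + r)%nat = 0) ->
  forall i r, (r < m)%nat -> sum_f_R0 a (m * i + r) = sum_f_R0 b i.
Proof.
  intros Hm Hab Hz.
  assert (H0 : forall i, sum_f_R0 a (m * i) = sum_f_R0 b i).
  { assert (Hr : forall i r, (r < m)%nat -> sum_f_R0 a (m * i + r) = sum_f_R0 a (m * i)).
    { intros i r. induction r; intro Hr. now rewrite Nat.add_0_r.
      replace (m * i + S r)%nat with (S (m * i + r)) by lia. simpl.
      rewrite IHr by lia. replace (S (m * i + r)) with (m * i + S r)%nat by lia.
      rewrite Hz by lia. ring. }
    induction i. simpl. rewrite Nat.mul_0_r. simpl. now rewrite <- Hab, Nat.mul_0_r.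
    replace (m * S i)%nat with (S (m * i + (m - 1))) by lia. simpl.
    rewrite Hr by lia. rewrite IHi.
    replace (S (m * i + (m - 1))) with (m * S i)%nat by lia. now rewrite Hab. }
  intros i r Hr. induction r. now rewrite Nat.add_0_r.
  replace (m * i + S r)%nat with (S (m * i + r)) by lia. simpl.
  rewrite IHr by lia. replace (S (m * i + r)) with (m * i + S r)%nat by lia.
  rewrite Hz by lia. ring.
Qed.

Lemma sparse_series (m : nat) (a b : nat -> R) (l : R) :
  (1 <= m)%nat ->
  (forall i, a (m * i)%nat = b i) ->
  (forall i r, (0 < r < m)%nat -> a (m * i + r)%nat = 0) ->
  is_series b l -> is_series a l.
Proof.
  intros Hm Hab Hz Hb. apply is_series_Reals. apply is_series_Reals in Hb.
  intros eps Heps. destruct (Hb eps Heps) as [N HN].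
  exists (m * N)%nat. intros n Hn.
  assert (Hmn : m <> 0%nat) by lia.
  rewrite (Nat.div_mod n m Hmn).
  rewrite (sparse_sum m a b Hm Hab Hz) by (apply Nat.mod_upper_bound; auto).
  apply HN. unfold ge.
  apply Nat.div_le_lower_bound; lia.
Qed.

Section Main.
Variables (q : R) (f F : R -> R) (m : nat) (C : R).
Hypothesis Hq : 0 < q < 1.

Definition qz (k : Z) := powerRZ q k.

Lemma qz_pos k : 0 < qz k.
Proof. apply powerRZ_lt; lra. Qed.

Lemma qz_S k : qz (k + 1) = qz k * q.
Proof. unfold qz. rewrite powerRZ_add by lra. simpl. ring. Qed.

Lemma qz_nat n : qz (Z.of_nat n) = q ^ n.
Proof. unfold qz. now rewrite <- pow_powerRZ. Qed.

Lemma qz_neg n : qz (- Z.of_nat n) = / q ^ n.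
Proof. unfold qz. now rewrite powerRZ_neg', <- pow_powerRZ. Qed.

Lemma lnq_neg : ln q < 0.
Proof. rewrite <- ln_1. apply ln_increasing; lra. Qed.

Lemma qz_exp k : qz k = exp (IZR k * ln q).
Proof. unfold qz. rewrite powerRZ_Rpower by lra. reflexivity. Qed.

Lemma qz_anti a b : (a <= b)%Z -> qz b <= qz a.
Proof.
  intro H. rewrite !qz_exp. apply IZR_le in H. pose proof lnq_neg.
  destruct (Req_dec (IZR a) (IZR b)) as [E|E]. rewrite E; lra.
  left. apply exp_increasing.
  assert (Hlt : IZR a < IZR b) by lra.
  assert (0 < (IZR b - IZR a) * (- ln q)) by (apply Rmult_lt_0_compat; lra). lra.
Qed.

Definition kx (x : R) : Z := (1 - up (- (ln x / ln q)))%Z.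

Lemma kx_br x : 0 < x -> qz (kx x) <= x < qz (kx x - 1).
Proof.
  intro Hx. pose proof lnq_neg as Hl.
  set (t := ln x / ln q).
  destruct (archimed (- t)) as [A1 A2].
  assert (Hk : IZR (kx x) = 1 - IZR (up (- t))).
  { unfold kx. fold t. rewrite minus_IZR. reflexivity. }
  assert (Ht : t * ln q = ln x) by (unfold t; field; lra).
  rewrite !qz_exp. split.
  - apply Rle_trans with (exp (t * ln q)). 2:{ rewrite Ht, exp_ln; lra. }
    assert (Hge : t <= IZR (kx x)) by lra.
    destruct (Rle_lt_or_eq_dec _ _ Hge) as [E|E]. 2:{ rewrite <- E; lra. }
    left. apply exp_increasing.
    assert (0 < (IZR (kx x) - t) * (- ln q)) by (apply Rmult_lt_0_compat; lra). lra.
  - apply Rle_lt_trans with (exp (t * ln q)). rewrite Ht, exp_ln; lra.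
    apply exp_increasing.
    rewrite minus_IZR. assert (IZR (kx x) - 1 < t) by lra.
    assert (0 < (t - (IZR (kx x) - 1)) * (- ln q)) by (apply Rmult_lt_0_compat; lra). lra.
Qed.

Lemma kx_unique x a : qz a <= x < qz (a - 1) -> kx x = a.
Proof.
  intro H. assert (Hx : 0 < x) by (pose proof (qz_pos a); lra).
  destruct (kx_br x Hx) as [B1 B2].
  destruct (Z.lt_trichotomy (kx x) a) as [L|[L|L]]; auto.
  - assert (qz (a - 1) <= qz (kx x)) by (apply qz_anti; lia). lra.
  - assert (qz (kx x - 1) <= qz a) by (apply qz_anti; lia). lra.
Qed.

Lemma qz_lt k : qz k < qz (k - 1).
Proof.
  replace (qz k) with (qz (k - 1 + 1)) by (f_equal; lia).
  rewrite qz_S. pose proof (qz_pos (k-1)). nra.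
Qed.

Lemma kx_qz k : kx (qz k) = k.
Proof. apply kx_unique. split. lra. apply qz_lt. Qed.

Lemma kx_mono x y : 0 < x <= y -> (kx y <= kx x)%Z.
Proof.
  intro H. destruct (kx_br x) as [A1 A2]. lra. destruct (kx_br y) as [B1 B2]. lra.
  destruct (Z.le_gt_cases (kx y) (kx x)) as [L|L]; auto.
  assert (qz (kx y - 1) <= qz (kx x)) by (apply qz_anti; lia). lra.
Qed.

Lemma kx_small K : exists d, 0 < d /\ forall y, 0 < y < d -> (K <= kx y)%Z.
Proof.
  exists (qz (K - 1)). split. apply qz_pos. intros y Hy.
  destruct (kx_br y) as [B1 B2]. lra.
  destruct (Z.le_gt_cases K (kx y)) as [L|L]; auto.
  assert (qz (K - 1) <= qz (kx y)) by (apply qz_anti; lia). lra.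
Qed.

Lemma kx_large K x : qz K < x -> (kx x <= K)%Z.
Proof.
  intro Hx. destruct (kx_br x) as [B1 B2]. pose proof (qz_pos K); lra.
  destruct (Z.le_gt_cases (kx x) K) as [L|L]; auto.
  assert (qz (kx x - 1) <= qz K) by (apply qz_anti; lia). lra.
Qed.

Lemma qz_big N : exists K, N < qz K.
Proof.
  exists (kx (Rmax N 1) - 1)%Z. destruct (kx_br (Rmax N 1)) as [B1 B2].
  pose proof (Rmax_r N 1); lra. pose proof (Rmax_l N 1). lra.
Qed.


Lemma series_shift (a : nat -> R) (L : R) : is_series a L -> is_series (fun j => a (S j)) (L - a O).
Proof.
  intro H. apply is_series_incr_1.
  match goal with |- is_series _ ?V => replace V with L end. exact H.
  change (@eq R L (L - a O + a O)). ring.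
Qed.

Lemma is_series_scal_R (c : R) (a : nat -> R) (l : R) :
  is_series a l -> is_series (fun n => c * a n) (c * l).
Proof. intro H. exact (is_series_scal c a l H). Qed.

Lemma is_series_plus_R (a b : nat -> R) (la lb : R) :
  is_series a la -> is_series b lb -> is_series (fun n => a n + b n) (la + lb).
Proof. intros H1 H2. exact (is_series_plus a b la lb H1 H2). Qed.

Lemma is_series_ext_R (a b : nat -> R) (l : R) :
  (forall n, a n = b n) -> is_series a l -> is_series b l.
Proof. intros E H. exact (is_series_ext a b l E H). Qed.

Hypothesis HF : nonneg_distribution_function F.
Hypothesis Hd : is_qdensity_of q f F.

Lemma F_step k : F (qz k) - F (qz (k + 1)) = (1 - q) * qz k * f (qz k).
Proof.
  pose proof (Hd (qz k) (qz_pos k)) as H1. pose proof (Hd (qz (k+1)) (qz_pos (k+1))) as H2.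
  unfold jackson_int in *. apply is_series_Reals in H1. apply is_series_Reals in H2.
  apply series_shift in H1.
  eapply is_series_ext in H1.
  2:{ intro j. instantiate (1 := fun j => qz (k + 1) * (1 - q) * (f (qz (k + 1) * q ^ j) * q ^ j)).
      simpl. rewrite qz_S. replace (qz k * (q * q ^ j)) with (qz k * q * q ^ j) by ring. ring. }
  apply is_series_unique in H1. apply is_series_unique in H2. rewrite H2 in H1.
  simpl in H1. rewrite !Rmult_1_r in H1. rewrite H1. ring.
Qed.

Lemma f_nonneg k : 0 <= f (qz k).
Proof.
  pose proof (F_step k). destruct HF as [Hmono _].
  assert (F (qz (k + 1)) <= F (qz k)).
  { apply Hmono. rewrite qz_S. pose proof (qz_pos k). nra. }
  pose proof (qz_pos k).
  assert (0 <= (1 - q) * qz k * f (qz k)) by lra.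
  assert (0 < (1 - q) * qz k) by (apply Rmult_lt_0_compat; lra).
  destruct (Rle_lt_dec 0 (f (qz k))) as [?|Hn]; auto.
  assert ((1 - q) * qz k * f (qz k) < 0).
  { rewrite <- (Rmult_0_r ((1 - q) * qz k)). apply Rmult_lt_compat_l; auto. }
  lra.
Qed.

Lemma F_tel n : F 1 - F (q ^ S n) = sum_f_R0 (fun j => 1 * (1 - q) * (f (1 * q ^ j) * q ^ j)) n.
Proof.
  induction n.
  - pose proof (F_step 0) as H. rewrite qz_S in H. change (qz 0) with 1 in H.
    simpl. replace (1 * 1) with 1 by ring. replace (q * 1) with (1 * q) by ring. lra.
  - simpl sum_f_R0. rewrite <- IHn. pose proof (F_step (Z.of_nat (S n))) as H.
    rewrite qz_S, qz_nat in H. replace (q ^ S n * q) with (q ^ S (S n)) in H by (simpl; ring).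
    replace (1 * (q * q ^ n)) with (q ^ S n) by (simpl; ring). replace (q * q ^ n) with (q ^ S n) by (simpl; ring). lra.
Qed.

Lemma F_zero eps : 0 < eps -> exists N, forall n, (n >= N)%nat -> Rabs (F (q ^ S n)) < eps.
Proof.
  intro He. pose proof (Hd 1 Rlt_0_1) as H1. unfold jackson_int in H1.
  destruct (H1 eps He) as [N HN]. exists N. intros n Hn.
  specialize (HN n Hn). unfold R_dist in HN. rewrite <- F_tel in HN.
  replace (F 1 - F (q ^ S n) - F 1) with (- F (q ^ S n)) in HN by ring.
  now rewrite Rabs_Ropp in HN.
Qed.

Lemma F_one eps : 0 < eps -> exists K, forall k, (k <= K)%Z -> Rabs (F (qz k) - 1) < eps.
Proof.
  intro He. destruct HF as (_ & _ & _ & Hlim).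
  destruct (Hlim eps He) as [N HN]. destruct (qz_big N) as [K HK].
  exists K. intros k Hk. apply HN. pose proof (qz_anti _ _ Hk). lra.
Qed.


Hypothesis Hm : (1 <= m)%nat.
Hypothesis HC : 0 < C.
Hypothesis Hf : forall j : nat, f (/ q ^ (m * j)) >= C * q ^ (m * (j * (j + 1) / 2)).

Definition p := q ^ m.
Lemma Hp : 0 < p < 1.
Proof. unfold p. split. apply pow_lt; lra. apply pow_lt_1_compat; lia || lra. Qed.

Definition K0 := exp (p / (1 - p) ^ 2).
Definition eps := C / K0.
Lemma eps_pos : 0 < eps.
Proof. unfold eps, K0. apply Rdiv_lt_0_compat; auto. apply exp_pos. Qed.

Definition hn (t : nat) : R := if Nat.eqb (t mod m) 0 then eps * ce p (t / m) else 0.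

Lemma hn_mul i : hn (m * i) = eps * ce p i.
Proof.
  unfold hn. rewrite (Nat.mul_comm m i), Nat.Div0.mod_mul. simpl.
  rewrite Nat.div_mul by lia. reflexivity.
Qed.

Lemma hn_zero i r : (0 < r < m)%nat -> hn (m * i + r) = 0.
Proof.
  intro H. unfold hn. replace (m * i + r)%nat with (r + i * m)%nat by lia.
  rewrite Nat.Div0.mod_add, Nat.mod_small by lia.
  destruct (Nat.eqb_spec r 0). lia. reflexivity.
Qed.

Lemma hn_bound t : 0 <= f (/ q ^ t) + hn t.
Proof.
  destruct (Nat.eqb_spec (t mod m) 0) as [E|E].
  - assert (Ht : t = (m * (t / m))%nat).
    { rewrite (Nat.div_mod t m) at 1 by lia. lia. }
    set (i := (t / m)%nat) in *. rewrite Ht, hn_mul.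
    pose proof (Hf i) as H1. change (i * (i + 1) / 2)%nat with (tri i) in H1.
    pose proof (ce_bound' p Hp i) as H2. fold K0 in H2.
    unfold p at 2 in H2. rewrite <- pow_mult in H2.
    assert (HK : 0 < K0) by apply exp_pos.
    assert (H3 : eps * Rabs (ce p i) <= C * q ^ (m * tri i)).
    { unfold eps. apply Rle_trans with (C / K0 * (K0 * q ^ (m * tri i))).
      apply Rmult_le_compat_l. left; apply eps_pos. exact H2.
      right. field. lra. }
    assert (H4 : - Rabs (ce p i) <= ce p i).
    { rewrite <- Rabs_Ropp. pose proof (Rle_abs (- ce p i)). lra. }
    pose proof eps_pos. nra.
  - unfold hn. destruct (Nat.eqb_spec (t mod m) 0). contradiction.
    rewrite <- qz_neg. rewrite Rplus_0_r. apply f_nonneg.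
Qed.

Lemma pw_id n i : (/ q ^ (m * i)) ^ n * / q ^ (m * i) = (/ p ^ (S n)) ^ i.
Proof.
  rewrite pow_mult. fold p. rewrite <- !pow_inv.
  replace (((/ p) ^ i) ^ n * (/ p) ^ i) with (((/ p) ^ i) ^ (S n)) by (simpl; ring).
  rewrite <- !pow_mult. f_equal. lia.
Qed.

Lemma M_series n : is_series (fun t => (/ q ^ t) ^ n * hn t * / q ^ t) 0.
Proof.
  apply sparse_series with m (fun i => eps * (ce p i * (/ p ^ (S n)) ^ i)); auto.
  - intro i. rewrite hn_mul, <- pw_id. ring.
  - intros i r Hr. rewrite hn_zero by auto. ring.
  - pose proof (is_series_scal_R eps _ _ (Te_series p n Hp)) as H.
    rewrite Rmult_0_r in H. exact H.
Qed.

Definition Dn (N : nat) := sum_f_R0 (fun t => (1 - q) * / q ^ t * hn t) N.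

Lemma D_lim e : 0 < e -> exists N, forall n, (n >= N)%nat -> Rabs (Dn n) < e.
Proof.
  intro He.
  pose proof (is_series_scal_R (1 - q) _ _ (M_series 0)) as H.
  rewrite Rmult_0_r in H.
  eapply is_series_ext in H.
  2:{ intro t. instantiate (1 := fun t => (1 - q) * / q ^ t * hn t). simpl. ring. }
  apply is_series_Reals in H. destruct (H e He) as [N HN]. exists N.
  intros n Hn. specialize (HN n Hn). unfold R_dist in HN. rewrite Rminus_0_r in HN. exact HN.
Qed.

Definition El (k : Z) : R := if Z.leb k 0 then Dn (Z.to_nat (- k)) else 0.
Definition hz (k : Z) : R := if Z.leb k 0 then hn (Z.to_nat (- k)) else 0.

Lemma El_neg n : El (- Z.of_nat n) = Dn n.
Proof.
  unfold El. destruct (Z.leb_spec (- Z.of_nat n) 0). 2: lia.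
  now rewrite Z.opp_involutive, Nat2Z.id.
Qed.
Lemma El_pos k : (0 < k)%Z -> El k = 0.
Proof. intro H. unfold El. destruct (Z.leb_spec k 0). lia. reflexivity. Qed.
Lemma hz_neg n : hz (- Z.of_nat n) = hn n.
Proof.
  unfold hz. destruct (Z.leb_spec (- Z.of_nat n) 0). 2: lia.
  now rewrite Z.opp_involutive, Nat2Z.id.
Qed.
Lemma hz_pos k : (0 < k)%Z -> hz k = 0.
Proof. intro H. unfold hz. destruct (Z.leb_spec k 0). lia. reflexivity. Qed.

Lemma Zcases k : (0 < k)%Z \/ exists n, k = (- Z.of_nat n)%Z.
Proof.
  destruct (Z.lt_ge_cases 0 k). now left. right. exists (Z.to_nat (- k)).
  rewrite Z2Nat.id; lia.
Qed.

Lemma El_step k : El k - El (k + 1) = (1 - q) * qz k * hz k.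
Proof.
  destruct (Zcases k) as [H|[n ->]].
  - rewrite !El_pos, hz_pos by lia. ring.
  - rewrite El_neg, hz_neg, qz_neg. destruct n.
    + simpl. rewrite El_pos by lia. unfold Dn. simpl. ring.
    + replace (- Z.of_nat (S n) + 1)%Z with (- Z.of_nat n)%Z by lia.
      rewrite El_neg. unfold Dn. simpl sum_f_R0. change (q ^ S n) with (q * q ^ n). ring.
Qed.

Definition Gl (k : Z) : R := F (qz k) + El k.

Lemma Gl_step k : Gl k - Gl (k + 1) = (1 - q) * qz k * (f (qz k) + hz k).
Proof. unfold Gl. pose proof (F_step k). pose proof (El_step k). lra. Qed.

Lemma step_nn k : 0 <= f (qz k) + hz k.
Proof.
  destruct (Zcases k) as [H|[n ->]].
  - rewrite hz_pos by auto. rewrite Rplus_0_r. apply f_nonneg.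
  - rewrite hz_neg, qz_neg. apply hn_bound.
Qed.

Lemma Gl_dec k : Gl (k + 1) <= Gl k.
Proof.
  pose proof (Gl_step k). pose proof (step_nn k). pose proof (qz_pos k).
  assert (0 <= (1 - q) * qz k * (f (qz k) + hz k)).
  { apply Rmult_le_pos; auto. apply Rmult_le_pos; lra. }
  lra.
Qed.

Lemma Gl_anti a b : (a <= b)%Z -> Gl b <= Gl a.
Proof.
  intro H. replace b with (a + Z.of_nat (Z.to_nat (b - a)))%Z by (rewrite Z2Nat.id; lia).
  generalize (Z.to_nat (b - a)). intro n. induction n.
  - simpl. rewrite Z.add_0_r. lra.
  - rewrite Nat2Z.inj_succ, <- Z.add_1_r, Z.add_assoc.
    pose proof (Gl_dec (a + Z.of_nat n)). lra.
Qed.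

Lemma Gl_zero e : 0 < e -> exists K, forall k, (K <= k)%Z -> Rabs (Gl k) < e.
Proof.
  intro He. destruct (F_zero e He) as [N HN]. exists (Z.of_nat (S N)).
  intros k Hk. replace k with (Z.of_nat (S (Z.to_nat k - 1))) by lia.
  unfold Gl. rewrite El_pos by lia. rewrite Rplus_0_r, qz_nat. apply HN. lia.
Qed.

Lemma Gl_one e : 0 < e -> exists K, forall k, (k <= K)%Z -> Rabs (Gl k - 1) < e.
Proof.
  intro He. destruct (F_one (e / 2)) as [K HK]. lra.
  destruct (D_lim (e / 2)) as [N HN]. lra.
  exists (Z.min K (- Z.of_nat N)). intros k Hk.
  replace k with (- Z.of_nat (Z.to_nat (- k)))%Z in * by lia.
  unfold Gl. rewrite El_neg.
  assert (A1 : Rabs (F (qz (- Z.of_nat (Z.to_nat (- k)))) - 1) < e / 2) by (apply HK; lia).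
  assert (A2 : Rabs (Dn (Z.to_nat (- k))) < e / 2) by (apply HN; lia).
  replace (F (qz (- Z.of_nat (Z.to_nat (- k)))) + Dn (Z.to_nat (- k)) - 1) with
    ((F (qz (- Z.of_nat (Z.to_nat (- k)))) - 1) + Dn (Z.to_nat (- k))) by ring.
  eapply Rle_lt_trans. apply Rabs_triang. lra.
Qed.

Lemma Gl_nn k : 0 <= Gl k.
Proof.
  destruct (Rle_lt_dec 0 (Gl k)) as [?|Hn]; auto.
  destruct (Gl_zero (- Gl k)) as [K HK]. lra.
  assert (H1 := HK (Z.max K k) (Z.le_max_l _ _)).
  assert (H2 := Gl_anti k (Z.max K k) (Z.le_max_r _ _)).
  rewrite Rabs_left in H1 by lra. lra.
Qed.


Definition G (x : R) : R := if Rle_dec x 0 then 0 else Gl (kx x).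
Definition g (x : R) : R := (G x - G (q * x)) / ((1 - q) * x).

Lemma G_pos x : 0 < x -> G x = Gl (kx x).
Proof. intro H. unfold G. destruct (Rle_dec x 0); [lra|reflexivity]. Qed.

Lemma G_qz k : G (qz k) = Gl k.
Proof. rewrite G_pos by apply qz_pos. now rewrite kx_qz. Qed.

Lemma g_qz k : g (qz k) = f (qz k) + hz k.
Proof.
  unfold g. rewrite G_qz. replace (q * qz k) with (qz (k + 1)) by (rewrite qz_S; ring).
  rewrite G_qz, Gl_step. pose proof (qz_pos k). field. lra.
Qed.

Lemma G_nn x : 0 <= G x.
Proof. unfold G. destruct (Rle_dec x 0). lra. apply Gl_nn. Qed.

Lemma G_at0 e : 0 < e -> exists d, 0 < d /\ forall y, 0 < y < d -> Rabs (G y) < e.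
Proof.
  intro He. destruct (Gl_zero e He) as [K HK]. destruct (kx_small K) as [d [Hd0 Hd1]].
  exists d. split; auto. intros y Hy. rewrite G_pos by lra. apply HK. apply Hd1. auto.
Qed.

Lemma G_dist : nonneg_distribution_function G.
Proof.
  split; [|split; [|split]].
  - intros x y Hxy. unfold G. destruct (Rle_dec x 0); destruct (Rle_dec y 0).
    + lra.
    + apply Gl_nn.
    + lra.
    + apply Gl_anti. apply kx_mono. lra.
  - intros x Hx. unfold G. destruct (Rle_dec x 0). reflexivity. lra.
  - intros x e He. destruct (Rtotal_order x 0) as [Hx|[Hx|Hx]].
    + exists (- x). split. lra. intros y Hy. unfold G.
      destruct (Rle_dec y 0); destruct (Rle_dec x 0); try lra.
      rewrite Rminus_0_r, Rabs_R0. lra.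
    + subst x. destruct (G_at0 e He) as [d [Hd0 Hd1]]. exists d. split; auto.
      intros y Hy. replace (G 0) with 0 by (unfold G; destruct (Rle_dec 0 0); lra).
      rewrite Rminus_0_r. apply Hd1. lra.
    + destruct (kx_br x Hx) as [B1 B2]. exists (qz (kx x - 1) - x). split. lra.
      intros y Hy. rewrite !G_pos by lra.
      rewrite (kx_unique y (kx x)) by lra. rewrite Rminus_diag, Rabs_R0. lra.
  - intros e He. destruct (Gl_one e He) as [K HK]. exists (qz K). intros x Hx.
    pose proof (qz_pos K). rewrite G_pos by lra. apply HK. apply kx_large. auto.
Qed.

Lemma telesc (u : nat -> R) n : sum_f_R0 (fun j => u j - u (S j)) n = u O - u (S n).
Proof. induction n. simpl. ring. simpl sum_f_R0. rewrite IHn. ring. Qed.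

Lemma G_dens : is_qdensity_of q g G.
Proof.
  intros x Hx. unfold jackson_int. intros e He.
  destruct (G_at0 e He) as [d [Hd0 Hd1]].
  assert (Hq1 : Rabs q < 1) by (rewrite Rabs_right; lra).
  destruct (pow_lt_1_zero q Hq1 (d / x)) as [N HN]. apply Rdiv_lt_0_compat; lra.
  exists N. intros n Hn.
  rewrite (sum_eq _ (fun j => G (x * q ^ j) - G (x * q ^ S j))).
  2:{ intros i _. unfold g. replace (q * (x * q ^ i)) with (x * q ^ S i) by (simpl; ring).
      assert (0 < q ^ i) by (apply pow_lt; lra). field. split; nra. }
  rewrite (telesc (fun j => G (x * q ^ j))). unfold R_dist.
  replace (x * q ^ 0) with x by (simpl; ring).
  replace (G x - G (x * q ^ S n) - G x) with (- G (x * q ^ S n)) by ring.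
  rewrite Rabs_Ropp. apply Hd1. split.
  assert (0 < q ^ S n) by (apply pow_lt; lra). nra.
  specialize (HN (S n) ltac:(lia)). rewrite Rabs_right in HN.
  2:{ apply Rle_ge. apply pow_le. lra. }
  apply (Rmult_lt_compat_l x) in HN; auto. replace (x * (d / x)) with d in HN by (field; lra). lra.
Qed.

Lemma mom n v : qmoment q f n v -> qmoment q g n v.
Proof.
  intros (v1 & v2 & H1 & H2 & Hv).
  exists (v1 + hn 0), (v2 - hn 0). split; [|split]; [| | rewrite Hv; ring].
  - apply is_series_Reals in H1. apply is_series_Reals.
    assert (He : is_series (fun j => (q ^ j) ^ n * hz (Z.of_nat j) * q ^ j) (hn 0)).
    { apply is_series_Reals. intros e He. exists O. intros N _.
      replace (sum_f_R0 (fun j => (q ^ j) ^ n * hz (Z.of_nat j) * q ^ j) N) with (hn 0).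
      unfold R_dist. rewrite Rminus_diag, Rabs_R0. lra.
      induction N. simpl. rewrite pow1. unfold hz. simpl. ring.
      simpl sum_f_R0. rewrite <- IHN. rewrite hz_pos by lia. ring. }
    pose proof (is_series_plus_R _ _ _ _ H1 He) as H.
    eapply is_series_ext_R; [|exact H]. intro j. cbv beta.
    rewrite <- qz_nat, g_qz. ring.
  - apply is_series_Reals in H2. apply is_series_Reals.
    pose proof (series_shift _ _ (M_series n)) as He.
    pose proof (is_series_plus_R _ _ _ _ H2 He) as H. cbv beta in H.
    replace (v2 + (0 - (/ q ^ 0) ^ n * hn 0 * / q ^ 0)) with (v2 - hn 0) in H.
    2:{ simpl. rewrite Rinv_1, pow1. ring. }
    eapply is_series_ext_R; [|exact H]. intro j. cbv beta.
    rewrite <- qz_neg, g_qz, hz_neg, qz_neg. ring.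
Qed.

Lemma indet : (forall k : nat, exists v, qmoment q f k v) -> qmoment_indeterminate q f.
Proof.
  intros Hmom Hdet.
  assert (Hq1 : qequiv q f g).
  { apply Hdet.
    - exists G. split. apply G_dist. apply G_dens.
    - intro k. destruct (Hmom k) as [v Hv]. exists v. split; auto. apply mom; auto. }
  specialize (Hq1 0%Z). change (powerRZ q 0) with (qz 0) in Hq1.
  rewrite g_qz in Hq1. replace (hz 0) with (hn (m * 0)) in Hq1.
  2:{ rewrite Nat.mul_0_r. reflexivity. }
  rewrite hn_mul in Hq1. simpl in Hq1. pose proof eps_pos. lra.
Qed.

End Main.

Theorem theorem3 (q : R) (f F : R -> R) (m : nat) (C : R) :
  0 < q < 1 ->
  nonneg_distribution_function F ->
  is_qdensity_of q f F ->
  (forall k : nat, exists v, qmoment q f k v) ->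
  (1 <= m)%nat ->
  0 < C ->
  (forall j : nat, f (/ q ^ (m * j)) >= C * q ^ (m * (j * (j + 1) / 2))) ->
  qmoment_indeterminate q f.
Proof.
  intros Hq HF Hd Hmom Hm HC Hf. eapply indet; eauto.
Qed.
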